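(* Suppose $\Delta_{\mathfrak g}$ is one of the seven irreducible locally affine root systems $X_J^{(r)}$ of infinite rank, realized as below, and let $\lambda\in i\mathfrak t_{\mathfrak g}^*$ with $\lambda_c:=\lambda(c)>0$. Write $\lambda_j:=\lambda$-coordinate at $j\in J$ (i.e. $\lambda|_{\mathfrak t}$ corresponds to $j\mapsto\lambda_j=\lambda(E_j)$). Then $\lambda$ is $d$-minimal iff: $A_J^{(1)}$: $\sup_j\lambda_j-\inf_j\lambda_j\le\lambda_c$; $B_J^{(1)}$: $|\lambda_j|+|\lambda_k|\le\lambda_c$ for $j\neq k$; $C_J^{(1)}$: $|\lambda_j|\le\lambda_c$ for all $j$; $D_J^{(1)}$: $|\lambda_j|+|\lambda_k|\le\lambda_c$ for $j\ne k$; $B_J^{(2)}$: $|\lambda_j|\le\lambda_c$ for all $j$; $C_J^{(2)}$: $|\lambda_j|+|\lambda_k|\le2\lambda_c$ for $j\ne k$; $BC_J^{(2)}$: $|\lambda_j|\le\lambda_c$ for all $j$.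
   Context: Setting: $\mathfrak k$ a simple infinite-dimensional Hilbert–Lie algebra with normalized scalar product ($(\alpha,\alpha)=2$ for long roots), $\phi$ a finite order automorphism; $\mathfrak g=\widehat{\mathcal L}_\phi(\mathfrak k)$ the double extension $\mathbb R\times\mathcal L_\phi(\mathfrak k)\times\mathbb R$ of smooth $\phi$-twisted loops with bracket $[(z_1,\xi_1,t_1),(z_2,\xi_2,t_2)]=(\langle\xi_1',\xi_2\rangle,t_1\xi_2'-t_2\xi_1'+[\xi_1,\xi_2],0)$; $c=(i,0,0)$, $d=(0,0,-i)$; $\mathfrak t\subseteq\mathfrak k^\phi$ maximal abelian, $\mathfrak t_{\mathfrak g}=\mathbb R\oplus\mathfrak t\oplus\mathbb R$; $\mathfrak t_{\mathbb C}\cong\ell^2(J,\mathbb C)$ with coordinate functionals $\varepsilon_j$ and dual elements $E_j$. The compact roots are $(\alpha,n)$ with $(\alpha,n)(z,h,t)=\alpha(h)+itn$, $\alpha\ne0$ a $\mathfrak t$-weight on the $e^{2\pi in/N}$-eigenspace of $L(\phi)^{-1}$; they form $\Delta_{\mathfrak g}$. The seven systems: $X_J^{(1)}=X_J\times\mathbb Z$ for $X\in\{A,B,C,D\}$ with $A_J=\{\varepsilon_j-\varepsilon_k\}$, $B_J=\{\pm\varepsilon_j\pm\varepsilon_k,\pm\varepsilon_j\}$, $C_J=\{\pm\varepsilon_j\pm\varepsilon_k,\pm2\varepsilon_j\}$, $D_J=\{\pm\varepsilon_j\pm\varepsilon_k\}$ ($j\ne k$); $B_J^{(2)}=(B_J\times2\mathbb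 Z)\cup(\{\pm\varepsilon_j\}\times(2\mathbb Z+1))$; $C_J^{(2)}=(C_J\times2\mathbb Z)\cup(D_J\times(2\mathbb Z+1))$; $BC_J^{(2)}=(B_J\times2\mathbb Z)\cup(BC_J\times(2\mathbb Z+1))$, $BC_J=B_J\cup C_J$. In cases $C_J^{(1)},C_J^{(2)},BC_J^{(2)}$ the normalization gives $\|\varepsilon_j\|^2=1/2$, otherwise $\|\varepsilon_j\|^2=1$. Coroot of $(\alpha,n)$: $\check\alpha-\frac{2n}{(\alpha,\alpha)}c$. $\widehat{\mathcal W}$ is the group generated by reflections $\lambda\mapsto\lambda-\lambda(\check{\underline\alpha})\underline\alpha$, $\underline\alpha\in\Delta_{\mathfrak g}$. $\lambda\in i\mathfrak t_{\mathfrak g}^*$ (algebraic dual) is $d$-minimal if $\lambda(d)=\min(\widehat{\mathcal W}\lambda)(d)$. *)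

(* Defs.v *)
From Stdlib Require Import Reals ZArith List Relations ClassicalEpsilon.
Open Scope R_scope.

(* Weight lambda in i t_g^*, recorded by the data the Weyl group action sees:
   lc = lambda(c), lt j = lambda(E_j), ld = lambda(d). *)
Record weight (J : Type) := mkW { lc : R; lt : J -> R; ld : R }.
Arguments mkW {J}. Arguments lc {J}. Arguments lt {J}. Arguments ld {J}.

Definition delta {J : Type} (i j : J) : R :=
  if excluded_middle_informative (i = j) then 1 else 0.

Definition sgn (b : bool) : R := if b then 1 else -1.

(* Finite roots in t^*:  Pair j k s t = s eps_j + t eps_k (j <> k),
   Sing j s = s eps_j,  Doub j s = 2 s eps_j. *)
Inductive froot (J : Type) :=
| Pair (j k : J) (s t : bool)
| Sing (j : J) (s : bool)
| Doub (j : J) (s : bool).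
Arguments Pair {J}. Arguments Sing {J}. Arguments Doub {J}.

Definition wf_froot {J : Type} (a : froot J) : Prop :=
  match a with Pair j k _ _ => j <> k | _ => True end.

Definition coeff {J : Type} (a : froot J) (i : J) : R :=
  match a with
  | Pair j k s t => sgn s * delta i j + sgn t * delta i k
  | Sing j s => sgn s * delta i j
  | Doub j s => 2 * sgn s * delta i j
  end.

Definition sqcoeff {J : Type} (a : froot J) : R :=
  match a with Pair _ _ _ _ => 2 | Sing _ _ => 1 | Doub _ _ => 4 end.

(* lambda(check alpha) = 2 sum_i a_i lambda_i / sum_i a_i^2 *)
Definition lam_check {J : Type} (a : froot J) (l : weight J) : R :=
  match a with
  | Pair j k s t => sgn s * lt l j + sgn t * lt l k
  | Sing j s => 2 * sgn s * lt l j
  | Doub j s => sgn s * lt l j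
  end.

Inductive lsys := A1 | B1 | C1 | D1 | B2 | C2 | BC2.

(* ||eps_j||^2 *)
Definition kappa (X : lsys) : R :=
  match X with C1 | C2 | BC2 => /2 | _ => 1 end.

Definition norm2 {J : Type} (X : lsys) (a : froot J) : R := kappa X * sqcoeff a.

Definition in_A {J} (a : froot J) : Prop :=
  match a with Pair _ _ s t => s <> t | _ => False end.
Definition in_B {J} (a : froot J) : Prop :=
  match a with Doub _ _ => False | _ => True end.
Definition in_C {J} (a : froot J) : Prop :=
  match a with Sing _ _ => False | _ => True end.
Definition in_D {J} (a : froot J) : Prop :=
  match a with Pair _ _ _ _ => True | _ => False end.
Definition in_BC {J} (a : froot J) : Prop := True.
Definition in_short {J} (a : froot J) : Prop :=
  match a with Sing _ _ => True | _ => False end.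

Definition is_root {J : Type} (X : lsys) (a : froot J) (n : Z) : Prop :=
  wf_froot a /\
  match X with
  | A1 => in_A a
  | B1 => in_B a
  | C1 => in_C a
  | D1 => in_D a
  | B2 => (Z.Even n /\ in_B a) \/ (Z.Odd n /\ in_short a)
  | C2 => (Z.Even n /\ in_C a) \/ (Z.Odd n /\ in_D a)
  | BC2 => (Z.Even n /\ in_B a) \/ (Z.Odd n /\ in_BC a)
  end.

(* lambda evaluated on the coroot  check alpha - 2n/(alpha,alpha) c *)
Definition lam_coroot {J : Type} (X : lsys) (a : froot J) (n : Z) (l : weight J) : R :=
  lam_check a l - 2 * IZR n / norm2 X a * lc l.

(* reflection  lambda - lambda(coroot) (alpha,n);  (alpha,n)(c)=0, (alpha,n)(E_i)=alpha(E_i), (alpha,n)(d)=n *)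
Definition reflect {J : Type} (X : lsys) (a : froot J) (n : Z) (l : weight J) : weight J :=
  let m := lam_coroot X a n l in
  mkW (lc l) (fun i => lt l i - m * coeff a i) (ld l - m * IZR n).

Definition refl_step {J : Type} (X : lsys) (l mu : weight J) : Prop :=
  exists a n, is_root X a n /\ mu = reflect X a n l.

Definition in_orbit {J : Type} (X : lsys) (l mu : weight J) : Prop :=
  clos_refl_trans (weight J) (refl_step X) l mu.

Definition d_minimal {J : Type} (X : lsys) (l : weight J) : Prop :=
  forall mu, in_orbit X l mu -> ld l <= ld mu.

Definition infinite_type (J : Type) : Prop :=
  forall l : list J, exists x, ~ In x l.

Definition minimality_cond {J : Type} (X : lsys) (l : weight J) : Prop :=
  match X with
  | A1 => forall j k, lt l j - lt l k <= lc l
  | B1 | D1 => forall j k, j <> k -> Rabs (lt l j) + Rabs (lt l k) <= lc l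
  | C1 | B2 | BC2 => forall j, Rabs (lt l j) <= lc l
  | C2 => forall j k, j <> k -> Rabs (lt l j) + Rabs (lt l k) <= 2 * lc l
  end.

(* Main.v *)
Require Import Defs.
From Stdlib Require Import Reals ZArith List Relations ClassicalEpsilon.
From Stdlib Require Import Lra Lia Psatz.
Import Defs.
Open Scope R_scope.


Fixpoint lsum {J : Type} (f : J -> R) (S : list J) : R :=
  match S with nil => 0 | x :: S' => f x + lsum f S' end.
Fixpoint zsum {J : Type} (f : J -> Z) (S : list J) : Z :=
  match S with nil => 0%Z | x :: S' => (f x + zsum f S')%Z end.

Lemma lsum_ext_in {J} (f g : J -> R) S : (forall x, In x S -> f x = g x) -> lsum f S = lsum g S.
Proof. induction S; simpl; intros H; auto. rewrite H, IHS; auto. Qed.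
Lemma zsum_ext_in {J} (f g : J -> Z) S : (forall x, In x S -> f x = g x) -> zsum f S = zsum g S.
Proof. induction S; simpl; intros H; auto. rewrite H, IHS; auto. Qed.
Lemma lsum_le {J} (f g : J -> R) S : (forall x, In x S -> f x <= g x) -> lsum f S <= lsum g S.
Proof. induction S; simpl; intros H. lra. pose proof (H a (or_introl eq_refl)). pose proof (IHS (fun x h => H x (or_intror h))). lra. Qed.
Lemma lsum_minus {J} (f g : J -> R) S : lsum (fun x => f x - g x) S = lsum f S - lsum g S.
Proof. induction S; simpl. lra. rewrite IHS; lra. Qed.
Lemma lsum_scal {J} (f : J -> R) k S : lsum (fun x => k * f x) S = k * lsum f S.
Proof. induction S; simpl. lra. rewrite IHS; lra. Qed.
Lemma lsum_IZR {J} (w : J -> Z) S : lsum (fun x => IZR (w x)) S = IZR (zsum w S).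
Proof. induction S; simpl. auto. rewrite IHS, plus_IZR; lra. Qed.

Lemma lsum_diff1 {J} (f g : J -> R) S j : NoDup S -> In j S -> (forall x, x <> j -> f x = g x) ->
  lsum f S = lsum g S + (f j - g j).
Proof.
  induction S as [|x S IH]; simpl; intros ND Hj H. contradiction.
  inversion ND; subst.
  destruct (excluded_middle_informative (x = j)) as [->|nx].
  - rewrite (lsum_ext_in f g S). lra. intros y hy. apply H. intros ->. contradiction.
  - destruct Hj as [->|Hj]. contradiction. rewrite IH, H; auto. lra.
Qed.
Lemma lsum_diff2 {J} (f g : J -> R) S j k : NoDup S -> In j S -> In k S -> j <> k ->
  (forall x, x <> j -> x <> k -> f x = g x) ->
  lsum f S = lsum g S + (f j - g j) + (f k - g k).
Proof.
  intros ND Hj Hk jk H.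
  set (h := fun x => if excluded_middle_informative (x = j) then g j else f x).
  rewrite (lsum_diff1 f h S j); auto.
  2:{ intros x nx. unfold h. destruct (excluded_middle_informative (x = j)); tauto. }
  rewrite (lsum_diff1 h g S k); auto.
  2:{ intros x nx. unfold h. destruct (excluded_middle_informative (x = j)); subst; auto. }
  unfold h. destruct (excluded_middle_informative (j = j)); [|tauto].
  destruct (excluded_middle_informative (k = j)). subst; tauto. lra.
Qed.
Lemma zsum_diff1 {J} (f g : J -> Z) S j : NoDup S -> In j S -> (forall x, x <> j -> f x = g x) ->
  zsum f S = (zsum g S + (f j - g j))%Z.
Proof.
  induction S as [|x S IH]; simpl; intros ND Hj H. contradiction.
  inversion ND; subst.
  destruct (excluded_middle_informative (x = j)) as [->|nx].
  - rewrite (zsum_ext_in f g S). lia. intros y hy. apply H. intros ->. contradiction.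
  - destruct Hj as [->|Hj]. contradiction. rewrite IH, H; auto. lia.
Qed.
Lemma zsum_diff2 {J} (f g : J -> Z) S j k : NoDup S -> In j S -> In k S -> j <> k ->
  (forall x, x <> j -> x <> k -> f x = g x) ->
  zsum f S = (zsum g S + (f j - g j) + (f k - g k))%Z.
Proof.
  intros ND Hj Hk jk H.
  set (h := fun x => if excluded_middle_informative (x = j) then g j else f x).
  rewrite (zsum_diff1 f h S j); auto.
  2:{ intros x nx. unfold h. destruct (excluded_middle_informative (x = j)); tauto. }
  rewrite (zsum_diff1 h g S k); auto.
  2:{ intros x nx. unfold h. destruct (excluded_middle_informative (x = j)); subst; auto. }
  unfold h. destruct (excluded_middle_informative (j = j)); [|tauto].
  destruct (excluded_middle_informative (k = j)). subst; tauto. lia.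
Qed.

Lemma ztri (z : Z) : (1 <= z)%Z \/ z = 0%Z \/ (z <= -1)%Z.
Proof. lia. Qed.

Lemma list_min {J} (f : J -> R) S : S <> nil -> exists y, In y S /\ forall x, In x S -> f y <= f x.
Proof.
  induction S as [|a S IH]; intros H. congruence.
  destruct S as [|b S'].
  - exists a. split. left; auto. intros x [->|[]]. lra.
  - destruct IH as [y [Hy Hm]]. discriminate.
    destruct (Rle_dec (f a) (f y)).
    + exists a. split. left; auto. intros x [->|Hx]. lra. specialize (Hm x Hx). lra.
    + exists y. split. right; auto. intros x [->|Hx]. lra. auto.
Qed.

Lemma termA c d w : 0 < c -> 0 <= d <= c -> (1 <= w \/ w = 0 \/ w <= -1) -> 0 <= 2*d*w + c*w*(w-1).
Proof. intros Hc Hd [H|[H|H]].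
  - assert (0 <= d*w) by (apply Rmult_le_pos; lra). assert (0 <= c*w*(w-1)) by (apply Rmult_le_pos; [apply Rmult_le_pos|]; lra). lra.
  - subst; lra.
  - assert (0 <= (c-d)*(-w)) by (apply Rmult_le_pos; lra). assert (0 <= c*((-w)*(-w-1))) by (apply Rmult_le_pos; [|apply Rmult_le_pos]; lra). nra. Qed.

Lemma keyA {J} (S : list J) nu w c : 0 < c -> (forall x y, nu x - nu y <= c) -> zsum w S = 0%Z ->
  0 <= lsum (fun x => (nu x + c * IZR (w x))^2 - nu x ^2) S.
Proof.
  intros Hc Hn Hs. destruct S as [|a S']. simpl; lra.
  destruct (list_min nu (a :: S')) as [y [Hy Hm]]. discriminate.
  apply Rle_trans with (lsum (fun x => (c*c + 2*c*nu y) * IZR (w x)) (a::S')).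
  - rewrite lsum_scal, lsum_IZR, Hs. lra.
  - apply lsum_le. intros x Hx. specialize (Hm x Hx). specialize (Hn x y).
    assert (Tr : 1 <= IZR (w x) \/ IZR (w x) = 0 \/ IZR (w x) <= -1).
    { destruct (ztri (w x)) as [h|[h|h]]; [left; apply IZR_le in h; lra| right;left; rewrite h; auto | right;right; apply IZR_le in h; lra]. }
    assert (T := termA c (nu x - nu y) (IZR (w x)) Hc ltac:(lra) Tr).
    assert (0 <= c * (2 * (nu x - nu y) * IZR (w x) + c * IZR (w x) * (IZR (w x) - 1))) by (apply Rmult_le_pos; lra).
    assert (E: (nu x + c*IZR (w x))^2 - nu x^2 - (c*c+2*c*nu y)*IZR (w x) = c*(2*(nu x - nu y)*IZR (w x) + c*IZR (w x)*(IZR (w x)-1))) by ring. lra.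
Qed.

Lemma abs_b x c : Rabs x <= c -> -c <= x <= c.
Proof. unfold Rabs; destruct (Rcase_abs x); lra. Qed.

Lemma keyC {J} (S : list J) nu w c : 0 < c -> (forall x, Rabs (nu x) <= c) -> (forall x, Z.Even (w x)) ->
  0 <= lsum (fun x => (nu x + c * IZR (w x))^2 - nu x ^2) S.
Proof.
  intros Hc Hn He. apply Rle_trans with (lsum (fun x => 0) S).
  - clear. induction S; simpl; lra.
  - apply lsum_le. intros x _. specialize (Hn x). destruct (He x) as [z Hz]. rewrite Hz.
    rewrite mult_IZR. apply abs_b in Hn.
    destruct (ztri z) as [h|[h|h]].
    + apply IZR_le in h. assert (0 <= 2*nu x + c*(2*IZR z)) by nra.
      assert (0 <= c*(2*IZR z) * (2*nu x + c*(2*IZR z))) by (apply Rmult_le_pos; [|lra]; nra). simpl IZR. nra.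
    + subst. simpl. lra.
    + apply IZR_le in h. assert (2*nu x + c*(2*IZR z) <= 0) by nra.
      assert (0 <= (-(c*(2*IZR z))) * (-(2*nu x + c*(2*IZR z)))) by (apply Rmult_le_pos; nra). simpl IZR. nra.
Qed.

Fixpoint cnt {J} (P : J -> bool) (S : list J) : nat :=
  match S with nil => O | x :: S' => if P x then Datatypes.S (cnt P S') else cnt P S' end.

Definition osum {J} (P : J -> bool) (a : J -> R) := fun x => if P x then a x else 0.

Lemma claim {J} (S : list J) (a : J -> R) P : NoDup S ->
  (forall x y, In x S -> In y S -> x <> y -> P x = true -> P y = true -> 0 <= a x + a y) ->
  forall b, (forall x, In x S -> P x = true -> 0 <= b + a x) -> (1 <= cnt P S)%nat ->
  0 <= b + lsum (osum P a) S.
Proof.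
  induction S as [|x S IH]; simpl; intros ND Hp b Hb Hc. lia.
  inversion ND; subst. unfold osum at 1.
  destruct (P x) eqn:Px.
  - destruct (cnt P S) eqn:Hn.
    + assert (lsum (osum P a) S = 0).
      { clear -Hn. induction S; simpl in *. auto. unfold osum at 1. destruct (P a0). lia. rewrite IHS; auto. lra. }
      specialize (Hb x (or_introl eq_refl) Px). lra.
    + destruct (Rle_dec 0 (a x)).
      * assert (0 <= b + lsum (osum P a) S).
        { apply IH; [auto| intros; apply Hp; auto | intros; apply Hb; auto | lia]. }
        lra.
      * assert (0 <= a x + lsum (osum P a) S).
        { apply IH; [auto| intros; apply Hp; auto | intros y Hy Py; apply Hp; auto; intros ->; contradiction | lia]. }
        specialize (Hb x (or_introl eq_refl) Px). lra.
  - assert (0 <= b + lsum (osum P a) S). { apply IH; [auto| intros; apply Hp; auto | intros; apply Hb; auto | auto]. }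
    lra.
Qed.

Lemma mainsum {J} (S : list J) (a : J -> R) P : NoDup S ->
  (forall x y, In x S -> In y S -> x <> y -> P x = true -> P y = true -> 0 <= a x + a y) ->
  cnt P S <> 1%nat -> 0 <= lsum (osum P a) S.
Proof.
  induction S as [|x S IH]; simpl; intros ND Hp Hc. lra.
  inversion ND; subst. unfold osum at 1. destruct (P x) eqn:Px.
  - apply claim; [auto| intros; apply Hp; auto | intros y Hy Py; apply Hp; auto; intros ->; contradiction | lia].
  - rewrite Rplus_0_l. apply IH; [auto | intros; apply Hp; auto | auto].
Qed.

Lemma parity {J} (w : J -> Z) S : Z.odd (zsum w S) = Nat.odd (cnt (fun x => Z.odd (w x)) S).
Proof.
  induction S as [|x S IH]; simpl. reflexivity.
  rewrite Z.odd_add, IH. destruct (Z.odd (w x)); simpl.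
  - rewrite Nat.odd_succ, <- Nat.negb_odd. reflexivity.
  - destruct (Nat.odd _); reflexivity.
Qed.

Lemma even_cnt {J} (w : J -> Z) S : Z.Even (zsum w S) -> cnt (fun x => Z.odd (w x)) S <> 1%nat.
Proof.
  intros He Hc. apply Z.even_spec in He. pose proof (parity w S) as Hp. rewrite Hc in Hp.
  rewrite <- Z.negb_even, He in Hp. discriminate.
Qed.

Lemma termB c nu z : 0 < c -> Rabs nu <= c ->
  (if Z.odd z then c - 2 * Rabs nu else 0) <= 2 * nu * IZR z + c * IZR z ^ 2.
Proof.
  intros Hc Hn. pose proof (abs_b _ _ Hn) as Hb.
  assert (Hab: - Rabs nu <= nu <= Rabs nu) by (unfold Rabs; destruct (Rcase_abs nu); lra).
  assert (Hz : (3 <= z)%Z \/ z = 2%Z \/ z = 1%Z \/ z = 0%Z \/ z = (-1)%Z \/ z = (-2)%Z \/ (z <= -3)%Z) by lia.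
  destruct Hz as [h|[h|[h|[h|[h|[h|h]]]]]]; try (subst; simpl; lra).
  - apply IZR_le in h. assert (c <= 2 * nu * IZR z + c * IZR z ^ 2).
    { assert (0 <= (IZR z - 3) * (c*IZR z + c)) by (apply Rmult_le_pos; nra). nra. }
    destruct (Z.odd z); pose proof (Rabs_pos nu); lra.
  - apply IZR_le in h. assert (c <= 2 * nu * IZR z + c * IZR z ^ 2).
    { assert (0 <= (-IZR z - 3) * (-c*IZR z + c)) by (apply Rmult_le_pos; nra). nra. }
    destruct (Z.odd z); pose proof (Rabs_pos nu); lra.
Qed.

Lemma keyB {J} (S : list J) nu w c : 0 < c -> NoDup S ->
  (forall x y, x <> y -> Rabs (nu x) + Rabs (nu y) <= c) -> (forall x, Rabs (nu x) <= c) ->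
  Z.Even (zsum w S) ->
  0 <= lsum (fun x => (nu x + c * IZR (w x))^2 - nu x ^2) S.
Proof.
  intros Hc ND Hp Hn He.
  apply Rle_trans with (lsum (fun x => c * osum (fun x => Z.odd (w x)) (fun x => c - 2 * Rabs (nu x)) x) S).
  - rewrite lsum_scal. apply Rmult_le_pos. lra. apply mainsum; auto.
    + intros x y _ _ nxy _ _. specialize (Hp x y nxy). lra.
    + apply even_cnt; auto.
  - apply lsum_le. intros x _. unfold osum. pose proof (termB c (nu x) (w x) Hc (Hn x)).
    assert (E: (nu x + c * IZR (w x))^2 - nu x^2 = c * (2 * nu x * IZR (w x) + c * IZR (w x) ^ 2)) by ring.
    rewrite E. apply Rmult_le_compat_l; lra.
Qed.

Definition eqd {J} (x y : J) := excluded_middle_informative (x = y).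

Definition zT (X : lsys) : Z := match X with C1 | C2 | BC2 => 2 | _ => 1 end%Z.
Definition zs (b : bool) : Z := if b then 1%Z else (-1)%Z.
Lemma IZR_zs b : IZR (zs b) = sgn b. Proof. destruct b; reflexivity. Qed.
Lemma kappa_zT X : kappa X * IZR (zT X) = 1. Proof. destruct X; simpl; lra. Qed.
Lemma kappa_pos X : 0 < kappa X. Proof. destruct X; simpl; lra. Qed.

Definition cond {J} X (nu : J -> R) c := minimality_cond X (mkW c nu 0).

Definition lat {J} X (S : list J) (w : J -> Z) : Prop :=
  match X with
  | A1 => zsum w S = 0%Z
  | B1 | D1 => (zsum w S mod 2 = 0)%Z
  | C1 | B2 | BC2 => forall x, (w x mod 2 = 0)%Z
  | C2 => (forall x, (w x mod 2 = 0)%Z) /\ (zsum w S mod 4 = 0)%Z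
  end.

Definition InvS {J} X (l mu : weight J) S nu (w : J -> Z) : Prop :=
  NoDup S /\ (forall x, ~ In x S -> nu x = lt l x /\ w x = 0%Z) /\
  (forall x, lt mu x = nu x + lc l * IZR (w x)) /\
  lsum (fun x => nu x ^ 2) S = lsum (fun x => lt l x ^ 2) S /\
  cond X nu (lc l) /\ lat X S w /\
  ld mu - ld l = kappa X / (2 * lc l) * (lsum (fun x => lt mu x ^ 2) S - lsum (fun x => lt l x ^ 2) S).

Definition Inv {J} X (l mu : weight J) : Prop := lc mu = lc l /\ exists S nu w, InvS X l mu S nu w.

Lemma extend {J} X (l mu : weight J) S nu w y : InvS X l mu S nu w ->
  exists S', InvS X l mu S' nu w /\ In y S' /\ incl S S'.
Proof.
  intros H. destruct (excluded_middle_informative (In y S)) as [i|ni].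
  - exists S. split; auto. split; auto. apply incl_refl.
  - exists (y :: S). split; [|split; [left; auto| apply incl_tl, incl_refl]].
    destruct H as (ND & Ho & Hm & Hs & Hc & Hl & Hd).
    destruct (Ho y ni) as [Hny Hwy].
    assert (Hmy : lt mu y = lt l y) by (rewrite Hm, Hny, Hwy; simpl; lra).
    split; [constructor; auto|].
    split; [intros x nx; apply Ho; intros h; apply nx; right; auto|].
    split; [auto|].
    split; [simpl; rewrite Hny; f_equal; exact Hs|].
    split; [auto|].
    split.
    + destruct X; simpl in *; try rewrite Hwy; simpl; auto; try tauto.
    + cbn [lsum]. rewrite Hd, Hmy. ring.
Qed.

Lemma mod2_even a : (a mod 2 = 0)%Z -> Z.Even a.
Proof. intros h. exists (a / 2)%Z. rewrite (Z.div_mod a 2) at 1 by lia. rewrite h. lia. Qed.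

Lemma zsum_double {J} (z : J -> Z) S : zsum (fun x => 2 * z x)%Z S = (2 * zsum z S)%Z.
Proof. induction S; cbn [zsum]; [reflexivity|]. rewrite IHS. ring. Qed.

Lemma abs_half x : Rabs (x / 2) = Rabs x / 2.
Proof. unfold Rabs; destruct (Rcase_abs (x/2)), (Rcase_abs x); lra. Qed.

Lemma final {J} (HJ : infinite_type J) X (l mu : weight J) S nu w : 0 < lc l ->
  InvS X l mu S nu w -> ld l <= ld mu.
Proof.
  intros Hc (ND & Ho & Hm & Hs & Hcd & Hl & Hd).
  set (c := lc l) in *.
  assert (K : 0 <= lsum (fun x => (nu x + c * IZR (w x))^2 - nu x ^2) S).
  { unfold cond, minimality_cond in Hcd; simpl in Hcd.
    destruct X; simpl in Hl.
    - apply keyA; auto.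
    - apply keyB; auto. intros x. destruct (HJ (x :: nil)) as [y Hy].
      assert (y <> x) by (intros ->; apply Hy; left; auto).
      pose proof (Hcd x y ltac:(auto)). pose proof (Rabs_pos (nu y)). lra.
      apply mod2_even; auto.
    - apply keyC; auto. intros; apply mod2_even; auto.
    - apply keyB; auto. intros x. destruct (HJ (x :: nil)) as [y Hy].
      assert (y <> x) by (intros ->; apply Hy; left; auto).
      pose proof (Hcd x y ltac:(auto)). pose proof (Rabs_pos (nu y)). lra.
      apply mod2_even; auto.
    - apply keyC; auto. intros; apply mod2_even; auto.
    - destruct Hl as [Hw H4].
      set (z := fun x => Z.div2 (w x)).
      assert (Hz : forall x, w x = (2 * z x)%Z).
      { intros x. unfold z. rewrite (Z.div2_odd (w x)) at 1.
        assert (Z.odd (w x) = false). { pose proof (mod2_even _ (Hw x)) as He. apply Z.even_spec in He. rewrite <- Z.negb_even, He. reflexivity. }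
        rewrite H; simpl. lia. }
      assert (E : lsum (fun x => (nu x + c * IZR (w x))^2 - nu x ^2) S =
                  lsum (fun x => 4 * ((nu x / 2 + c * IZR (z x))^2 - (nu x / 2) ^2)) S).
      { apply lsum_ext_in. intros x _. rewrite Hz, mult_IZR. field. }
      rewrite E, lsum_scal. apply Rmult_le_pos. lra.
      apply keyB; auto.
      + intros x y nxy. specialize (Hcd x y nxy). rewrite !abs_half. lra.
      + intros x. destruct (HJ (x :: nil)) as [y Hy].
        assert (y <> x) by (intros ->; apply Hy; left; auto).
        pose proof (Hcd x y ltac:(auto)). pose proof (Rabs_pos (nu y)).
        rewrite abs_half. lra.
      + rewrite (zsum_ext_in w (fun x => 2 * z x)%Z) in H4 by auto.
        rewrite zsum_double in H4. exists (zsum z S / 2)%Z. Z.div_mod_to_equations. lia.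
    - apply keyC; auto. intros; apply mod2_even; auto. }
  rewrite (lsum_ext_in (fun x => lt mu x ^ 2) (fun x => (nu x + c * IZR (w x))^2)) in Hd
    by (intros x _; rewrite Hm; auto).
  rewrite <- Hs, <- lsum_minus in Hd.
  assert (0 <= kappa X / (2 * c)) by (pose proof (kappa_pos X); apply Rle_mult_inv_pos; lra).
  assert (0 <= kappa X / (2 * c) * lsum (fun x => (nu x + c * IZR (w x))^2 - nu x ^2) S) by (apply Rmult_le_pos; auto).
  lra.
Qed.

Definition nuP {J} (nu : J -> R) j k (p : R) := fun x =>
  if eqd x j then - p * nu k else if eqd x k then - p * nu j else nu x.
Definition wP {J} (w : J -> Z) j k (pz qj qk : Z) := fun x =>
  if eqd x j then (- pz * w k + qj)%Z else if eqd x k then (- pz * w j + qk)%Z else w x.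
Definition nuS {J} (nu : J -> R) j := fun x => if eqd x j then - nu j else nu x.
Definition wS {J} (w : J -> Z) j (q : Z) := fun x => if eqd x j then (- w j + q)%Z else w x.

Lemma eqd_t {J} (x : J) {A} (a b : A) : (if eqd x x then a else b) = a.
Proof. unfold eqd; destruct (excluded_middle_informative (x = x)); tauto. Qed.
Lemma eqd_f {J} (x y : J) {A} (a b : A) : x <> y -> (if eqd x y then a else b) = b.
Proof. unfold eqd; destruct (excluded_middle_informative (x = y)); tauto. Qed.

Lemma stepP {J} X (l mu mu' : weight J) S nu w j k pz qj qk :
  InvS X l mu S nu w -> In j S -> In k S -> j <> k -> (pz * pz = 1)%Z ->
  (forall x, x <> j -> x <> k -> lt mu' x = lt mu x) ->
  lt mu' j = - IZR pz * lt mu k + lc l * IZR qj ->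
  lt mu' k = - IZR pz * lt mu j + lc l * IZR qk ->
  ld mu' - ld mu = kappa X / (2 * lc l) * ((lt mu' j ^ 2 - lt mu j ^ 2) + (lt mu' k ^ 2 - lt mu k ^ 2)) ->
  (cond X nu (lc l) -> cond X (nuP nu j k (IZR pz)) (lc l)) ->
  (lat X S w -> lat X S (wP w j k pz qj qk)) ->
  InvS X l mu' S (nuP nu j k (IZR pz)) (wP w j k pz qj qk).
Proof.
  intros (ND & Ho & Hm & Hs & Hcd & Hl & Hd) Hj Hk jk Hp Hoff Hmj Hmk Hld HC HL.
  assert (Hp' : IZR pz * IZR pz = 1) by (rewrite <- mult_IZR, Hp; reflexivity).
  assert (kj : k <> j) by auto.
  split; [auto|].
  split. { intros x nx. assert (x <> j) by (intros ->; auto). assert (x <> k) by (intros ->; auto).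
           unfold nuP, wP. rewrite !eqd_f by auto. auto. }
  split. { intros x. unfold nuP, wP.
    destruct (eqd x j) as [->|nj]. rewrite Hmj, Hm, plus_IZR, mult_IZR, opp_IZR. ring.
    destruct (eqd x k) as [->|nk]. rewrite Hmk, Hm, plus_IZR, mult_IZR, opp_IZR. ring.
    rewrite Hoff by auto. auto. }
  split. { rewrite <- Hs. rewrite (lsum_diff2 _ (fun x => nu x ^ 2) S j k); auto.
    - unfold nuP. rewrite eqd_t, (eqd_f k j), eqd_t by auto. 
      assert (E: (- IZR pz * nu k) ^ 2 - nu j ^ 2 + ((- IZR pz * nu j) ^ 2 - nu k ^ 2) = 0).
      { replace ((- IZR pz * nu k) ^ 2) with ((IZR pz * IZR pz) * nu k ^ 2) by ring.
        replace ((- IZR pz * nu j) ^ 2) with ((IZR pz * IZR pz) * nu j ^ 2) by ring. rewrite Hp'. ring. }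
      lra.
    - intros x nj nk. unfold nuP. rewrite !eqd_f by auto. auto. }
  split; [auto|].
  split; [auto|].
  rewrite (lsum_diff2 (fun x => lt mu' x ^ 2) (fun x => lt mu x ^ 2) S j k); auto.
  2:{ intros x nj nk. rewrite Hoff; auto. }
  replace (ld mu' - ld l) with ((ld mu' - ld mu) + (ld mu - ld l)) by ring.
  rewrite Hld, Hd. ring.
Qed.

Lemma stepS {J} X (l mu mu' : weight J) S nu w j q :
  InvS X l mu S nu w -> In j S ->
  (forall x, x <> j -> lt mu' x = lt mu x) ->
  lt mu' j = - lt mu j + lc l * IZR q ->
  ld mu' - ld mu = kappa X / (2 * lc l) * (lt mu' j ^ 2 - lt mu j ^ 2) ->
  (cond X nu (lc l) -> cond X (nuS nu j) (lc l)) ->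
  (lat X S w -> lat X S (wS w j q)) ->
  InvS X l mu' S (nuS nu j) (wS w j q).
Proof.
  intros (ND & Ho & Hm & Hs & Hcd & Hl & Hd) Hj Hoff Hmj Hld HC HL.
  split; [auto|].
  split. { intros x nx. assert (x <> j) by (intros ->; auto).
           unfold nuS, wS. rewrite !eqd_f by auto. auto. }
  split. { intros x. unfold nuS, wS.
    destruct (eqd x j) as [->|nj]. rewrite Hmj, Hm, plus_IZR, opp_IZR. ring.
    rewrite Hoff by auto. auto. }
  split. { rewrite <- Hs. rewrite (lsum_diff1 _ (fun x => nu x ^ 2) S j); auto.
    - unfold nuS. rewrite eqd_t. ring.
    - intros x nj. unfold nuS. rewrite !eqd_f by auto. auto. }
  split; [auto|].
  split; [auto|].
  rewrite (lsum_diff1 (fun x => lt mu' x ^ 2) (fun x => lt mu x ^ 2) S j); auto.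
  2:{ intros x nj. rewrite Hoff; auto. }
  replace (ld mu' - ld l) with ((ld mu' - ld mu) + (ld mu - ld l)) by ring.
  rewrite Hld, Hd. ring.
Qed.

Lemma delta_t {J} (x : J) : delta x x = 1.
Proof. unfold delta; destruct (excluded_middle_informative (x = x)); tauto. Qed.
Lemma delta_f {J} (x y : J) : x <> y -> delta x y = 0.
Proof. unfold delta; destruct (excluded_middle_informative (x = y)); tauto. Qed.

Section S. End S.

Lemma reflP_off {J} X (mu : weight J) j k s t n x : x <> j -> x <> k ->
  lt (reflect X (Pair j k s t) n mu) x = lt mu x.
Proof. intros; simpl. rewrite !delta_f by auto. ring. Qed.

Lemma reflP_j {J} X (mu : weight J) j k s t n : j <> k ->
  lt (reflect X (Pair j k s t) n mu) j =
  - IZR (zs s * zs t) * lt mu k + lc mu * IZR (zs s * (zT X * n)).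
Proof. intros jk; simpl. rewrite delta_t, delta_f by auto. unfold lam_coroot, norm2; simpl.
  rewrite !mult_IZR, !IZR_zs. destruct X, s, t; simpl; field. Qed.

Lemma reflP_k {J} X (mu : weight J) j k s t n : j <> k ->
  lt (reflect X (Pair j k s t) n mu) k =
  - IZR (zs s * zs t) * lt mu j + lc mu * IZR (zs t * (zT X * n)).
Proof. intros jk; simpl. rewrite delta_t, delta_f by auto. unfold lam_coroot, norm2; simpl.
  rewrite !mult_IZR, !IZR_zs. destruct X, s, t; simpl; field. Qed.

Lemma reflP_ld {J} X (mu : weight J) j k s t n : j <> k -> 0 < lc mu ->
  let mu' := reflect X (Pair j k s t) n mu in
  ld mu' - ld mu = kappa X / (2 * lc mu) * ((lt mu' j ^ 2 - lt mu j ^ 2) + (lt mu' k ^ 2 - lt mu k ^ 2)).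
Proof. intros jk Hc mu'. assert (kj : k <> j) by auto. unfold mu'. simpl. rewrite !delta_t, !delta_f by auto.
  unfold lam_coroot, norm2; simpl. destruct X, s, t; simpl; field; lra. Qed.

Lemma reflS_off {J} X (mu : weight J) j s n x : x <> j ->
  lt (reflect X (Sing j s) n mu) x = lt mu x.
Proof. intros; simpl. rewrite !delta_f by auto. ring. Qed.
Lemma reflD_off {J} X (mu : weight J) j s n x : x <> j ->
  lt (reflect X (Doub j s) n mu) x = lt mu x.
Proof. intros; simpl. rewrite !delta_f by auto. ring. Qed.

Lemma reflS_j {J} X (mu : weight J) j s n :
  lt (reflect X (Sing j s) n mu) j = - lt mu j + lc mu * IZR (zs s * (2 * zT X * n)).
Proof. simpl. rewrite delta_t. unfold lam_coroot, norm2; simpl.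
  rewrite !mult_IZR, !IZR_zs. destruct X, s; simpl; field. Qed.
Lemma reflD_j {J} X (mu : weight J) j s n :
  lt (reflect X (Doub j s) n mu) j = - lt mu j + lc mu * IZR (zs s * (zT X * n)).
Proof. simpl. rewrite delta_t. unfold lam_coroot, norm2; simpl.
  rewrite !mult_IZR, !IZR_zs. destruct X, s; simpl; field. Qed.

Lemma reflS_ld {J} X (mu : weight J) j s n : 0 < lc mu ->
  let mu' := reflect X (Sing j s) n mu in
  ld mu' - ld mu = kappa X / (2 * lc mu) * (lt mu' j ^ 2 - lt mu j ^ 2).
Proof. intros Hc mu'. unfold mu'. simpl. rewrite delta_t.
  unfold lam_coroot, norm2; simpl. destruct X, s; simpl; field; lra. Qed.
Lemma reflD_ld {J} X (mu : weight J) j s n : 0 < lc mu ->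
  let mu' := reflect X (Doub j s) n mu in
  ld mu' - ld mu = kappa X / (2 * lc mu) * (lt mu' j ^ 2 - lt mu j ^ 2).
Proof. intros Hc mu'. unfold mu'. simpl. rewrite delta_t.
  unfold lam_coroot, norm2; simpl. destruct X, s; simpl; field; lra. Qed.

Lemma cond_abs {J} X (nu nu' : J -> R) c (tau : J -> J) : X <> A1 ->
  (forall x, Rabs (nu' x) = Rabs (nu (tau x))) -> (forall x y, x <> y -> tau x <> tau y) ->
  cond X nu c -> cond X nu' c.
Proof.
  intros NA Ha Hi. unfold cond, minimality_cond; destruct X; simpl; try congruence;
  intros H; intros; rewrite ?Ha; apply H; auto.
Qed.

Lemma cond_A {J} (nu nu' : J -> R) c (tau : J -> J) :
  (forall x, nu' x = nu (tau x)) -> cond A1 nu c -> cond A1 nu' c.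
Proof. unfold cond, minimality_cond; simpl. intros Ha H j k. rewrite !Ha; auto. Qed.

Definition swap {J} (j k x : J) := if eqd x j then k else if eqd x k then j else x.
Lemma swap_inj {J} (j k : J) : j <> k -> forall x y, x <> y -> swap j k x <> swap j k y.
Proof.
  intros jk x y nxy. unfold swap.
  destruct (eqd x j), (eqd x k), (eqd y j), (eqd y k); subst; congruence.
Qed.

Lemma abs_sgn s t a : Rabs (- IZR (zs s * zs t) * a) = Rabs a.
Proof. rewrite Rabs_mult, Rabs_Ropp. replace (Rabs (IZR (zs s * zs t))) with 1. ring.
  destruct s, t; simpl; unfold Rabs; destruct Rcase_abs; lra. Qed.

Lemma condP {J} X (nu : J -> R) c j k s t n : is_root X (Pair j k s t) n ->
  cond X nu c -> cond X (nuP nu j k (IZR (zs s * zs t))) c.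
Proof.
  intros [jk Hr]. simpl in jk.
  destruct (excluded_middle_informative (X = A1)) as [->|NA].
  - simpl in Hr. apply cond_A with (swap j k). intros x. unfold nuP, swap.
    assert (E : - IZR (zs s * zs t) = 1) by (destruct s, t; simpl; try congruence; lra).
    destruct (eqd x j); [rewrite E; ring|]. destruct (eqd x k); [rewrite E; ring|]. auto.
  - apply cond_abs with (swap j k); auto. 2: apply swap_inj; auto.
    intros x. unfold nuP, swap. destruct (eqd x j); [apply abs_sgn|]. destruct (eqd x k); [apply abs_sgn|]. auto.
Qed.

Lemma condS {J} X (nu : J -> R) c j : X <> A1 -> cond X nu c -> cond X (nuS nu j) c.
Proof.
  intros NA. apply cond_abs with (fun x => x); auto.
  intros x. unfold nuS. destruct (eqd x j); subst; auto. apply Rabs_Ropp.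
Qed.

Lemma latP {J} X S (w : J -> Z) j k s t n : is_root X (Pair j k s t) n -> NoDup S -> In j S -> In k S ->
  lat X S w -> lat X S (wP w j k (zs s * zs t) (zs s * (zT X * n)) (zs t * (zT X * n))).
Proof.
  intros [jk Hr] ND Hj Hk. simpl in jk. assert (kj : k <> j) by auto.
  assert (Hz : zsum (wP w j k (zs s * zs t) (zs s * (zT X * n)) (zs t * (zT X * n))) S =
     (zsum w S + ((- (zs s * zs t) * w k + zs s * (zT X * n)) - w j) + ((- (zs s * zs t) * w j + zs t * (zT X * n)) - w k))%Z).
  { rewrite (zsum_diff2 _ w S j k); auto.
    - unfold wP. rewrite eqd_t, (eqd_f k j), eqd_t by auto. reflexivity.
    - intros x nj nk. unfold wP. rewrite !eqd_f by auto. auto. }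
  assert (Hx : forall x, (wP w j k (zs s * zs t) (zs s * (zT X * n)) (zs t * (zT X * n))) x = w x \/
     (wP w j k (zs s * zs t) (zs s * (zT X * n)) (zs t * (zT X * n))) x = (- (zs s * zs t) * w k + zs s * (zT X * n))%Z \/
     (wP w j k (zs s * zs t) (zs s * (zT X * n)) (zs t * (zT X * n))) x = (- (zs s * zs t) * w j + zs t * (zT X * n))%Z).
  { intros x. unfold wP. destruct (eqd x j); auto. destruct (eqd x k); auto. }
  unfold lat. rewrite Hz. clear Hz.
  destruct X; simpl in Hr; unfold zT in *.
  - intros H. destruct s, t; unfold zs in *; try congruence; lia.
  - intros H. destruct s, t; unfold zs; Z.div_mod_to_equations; lia.
  - intros H x. pose proof (H j). pose proof (H k). destruct (Hx x) as [ -> | [ -> | -> ]]; auto;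
    destruct s, t; unfold zs; Z.div_mod_to_equations; lia.
  - intros H. destruct s, t; unfold zs; Z.div_mod_to_equations; lia.
  - intros H x. pose proof (H j). pose proof (H k). destruct Hr as [[[m Hm] _]|[_ []]]. subst n.
    destruct (Hx x) as [ -> | [ -> | -> ]]; auto;
    destruct s, t; unfold zs; Z.div_mod_to_equations; lia.
  - intros [H H4]. pose proof (H j). pose proof (H k). split.
    + intros x. destruct (Hx x) as [ -> | [ -> | -> ]]; auto;
      destruct s, t; unfold zs; Z.div_mod_to_equations; lia.
    + destruct s, t; unfold zs; Z.div_mod_to_equations; lia.
  - intros H x. pose proof (H j). pose proof (H k).
    destruct (Hx x) as [ -> | [ -> | -> ]]; auto;
    destruct s, t; unfold zs; Z.div_mod_to_equations; lia.
Qed.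

Lemma latS1 {J} X S (w : J -> Z) j q : NoDup S -> In j S ->
  (X = A1 -> False) ->
  ((X = B1 \/ X = D1) -> (q mod 2 = 0)%Z) ->
  ((X = C1 \/ X = B2 \/ X = BC2 \/ X = C2) -> (q mod 2 = 0)%Z) ->
  (X = C2 -> (forall x, (w x mod 2 = 0)%Z) -> ((- 2 * w j + q) mod 4 = 0)%Z) ->
  lat X S w -> lat X S (wS w j q).
Proof.
  intros ND Hj NA HB HC HC2.
  assert (Hz : zsum (wS w j q) S = (zsum w S + ((- w j + q) - w j))%Z).
  { rewrite (zsum_diff1 _ w S j); auto.
    - unfold wS. rewrite eqd_t. reflexivity.
    - intros x nj. unfold wS. rewrite !eqd_f by auto. auto. }
  assert (Hx : forall x, wS w j q x = w x \/ wS w j q x = (- w j + q)%Z).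
  { intros x. unfold wS. destruct (eqd x j); auto. }
  unfold lat. rewrite Hz. clear Hz.
  destruct X.
  - exfalso; auto.
  - intros H. specialize (HB (or_introl eq_refl)). Z.div_mod_to_equations; lia.
  - intros H x. specialize (HC ltac:(auto)). pose proof (H j). destruct (Hx x) as [ -> | -> ]; auto.
    Z.div_mod_to_equations; lia.
  - intros H. specialize (HB (or_intror eq_refl)). Z.div_mod_to_equations; lia.
  - intros H x. specialize (HC ltac:(auto)). pose proof (H j). destruct (Hx x) as [ -> | -> ]; auto.
    Z.div_mod_to_equations; lia.
  - intros [H H4]. specialize (HC ltac:(auto)). specialize (HC2 eq_refl H). pose proof (H j). split.
    + intros x. destruct (Hx x) as [ -> | -> ]; auto. Z.div_mod_to_equations; lia.
    + Z.div_mod_to_equations; lia.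
  - intros H x. specialize (HC ltac:(auto)). pose proof (H j). destruct (Hx x) as [ -> | -> ]; auto.
    Z.div_mod_to_equations; lia.
Qed.

Lemma latSing {J} X S (w : J -> Z) j s n : is_root X (Sing j s) n -> NoDup S -> In j S ->
  lat X S w -> lat X S (wS w j (zs s * (2 * zT X * n))).
Proof.
  intros [_ Hr] ND Hj. apply latS1; auto.
  - intros ->; simpl in Hr; auto.
  - intros _. destruct s; unfold zs; Z.div_mod_to_equations; lia.
  - intros _. destruct s; unfold zs; Z.div_mod_to_equations; lia.
  - intros -> H. simpl in Hr. destruct Hr as [[_ []]|[_ []]].
Qed.

Lemma latDoub {J} X S (w : J -> Z) j s n : is_root X (Doub j s) n -> NoDup S -> In j S ->
  lat X S w -> lat X S (wS w j (zs s * (zT X * n))).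
Proof.
  intros [_ Hr] ND Hj. apply latS1; auto.
  - intros ->; simpl in Hr; auto.
  - intros [-> | ->]; simpl in Hr; destruct Hr.
  - intros [-> | [-> | [-> | ->]]]; simpl in Hr; unfold zT; try (destruct s; unfold zs; Z.div_mod_to_equations; lia).
  - intros -> H. simpl in Hr. destruct Hr as [[[m Hm] _]|[_ []]]. subst n. pose proof (H j).
    unfold zT. destruct s; unfold zs; Z.div_mod_to_equations; lia.
Qed.

Lemma notA_S {J} X (j : J) s n : is_root X (Sing j s) n -> X <> A1.
Proof. intros [_ Hr] ->. simpl in Hr. auto. Qed.
Lemma notA_D {J} X (j : J) s n : is_root X (Doub j s) n -> X <> A1.
Proof. intros [_ Hr] ->. simpl in Hr. auto. Qed.

Lemma step_inv {J} X (l mu mu' : weight J) : 0 < lc l ->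
  Inv X l mu -> refl_step X mu mu' -> Inv X l mu'.
Proof.
  intros Hc [Hlc [S [nu [w HI]]]] [a [n [Hr ->]]].
  split. { simpl. auto. }
  destruct a as [j k s t | j s | j s].
  - assert (jk : j <> k) by (destruct Hr as [h _]; exact h).
    destruct (extend X l mu S nu w j HI) as [S1 [HI1 [Hj1 _]]].
    destruct (extend X l mu S1 nu w k HI1) as [S2 [HI2 [Hk2 Hi2]]].
    pose proof (Hi2 j Hj1) as Hj2.
    exists S2, (nuP nu j k (IZR (zs s * zs t))), (wP w j k (zs s * zs t) (zs s * (zT X * n)) (zs t * (zT X * n))).
    apply (stepP X l mu); auto.
    + destruct s, t; reflexivity.
    + intros; apply reflP_off; auto.
    + rewrite reflP_j by auto. rewrite Hlc. auto.
    + rewrite reflP_k by auto. rewrite Hlc. auto.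
    + rewrite <- Hlc. exact (reflP_ld X mu j k s t n jk ltac:(rewrite Hlc; lra)).
    + apply (condP X nu (lc l) j k s t n Hr).
    + apply latP; auto. destruct HI2; auto.
  - destruct (extend X l mu S nu w j HI) as [S1 [HI1 [Hj1 _]]].
    exists S1, (nuS nu j), (wS w j (zs s * (2 * zT X * n))).
    apply (stepS X l mu); auto.
    + intros; apply reflS_off; auto.
    + rewrite reflS_j, Hlc. auto.
    + rewrite <- Hlc. exact (reflS_ld X mu j s n ltac:(rewrite Hlc; lra)).
    + apply condS. eapply notA_S; eauto.
    + apply latSing; auto. destruct HI1; auto.
  - destruct (extend X l mu S nu w j HI) as [S1 [HI1 [Hj1 _]]].
    exists S1, (nuS nu j), (wS w j (zs s * (zT X * n))).
    apply (stepS X l mu); auto.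
    + intros; apply reflD_off; auto.
    + rewrite reflD_j, Hlc. auto.
    + rewrite <- Hlc. exact (reflD_ld X mu j s n ltac:(rewrite Hlc; lra)).
    + apply condS. eapply notA_D; eauto.
    + apply latDoub; auto. destruct HI1; auto.
Qed.

Lemma inv_init {J} X (l : weight J) : minimality_cond X l -> Inv X l l.
Proof.
  intros H. split; auto. exists nil, (lt l), (fun _ => 0%Z).
  split. constructor.
  split. intros; auto.
  split. intros; simpl; ring.
  split. reflexivity.
  split. destruct l; exact H.
  split. { destruct X; simpl; auto; try split; intros; reflexivity. }
  simpl. ring.
Qed.

Lemma orbit_inv {J} X (l mu : weight J) : 0 < lc l -> minimality_cond X l -> in_orbit X l mu -> Inv X l mu.
Proof.
  intros Hc Hm H. apply clos_rt_rtn1 in H. induction H.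
  - apply inv_init; auto.
  - eapply step_inv; eauto.
Qed.

Lemma dm_root {J} X (l : weight J) a : d_minimal X l -> is_root X a 1 -> lam_coroot X a 1 l <= 0.
Proof.
  intros H Hr. assert (Ho : in_orbit X l (reflect X a 1 l)).
  { apply rt_step. exists a, 1%Z. auto. }
  specialize (H _ Ho). simpl in H. lra.
Qed.

Definition sb (x : R) : bool := if Rle_dec 0 x then true else false.
Lemma sgn_abs x : sgn (sb x) * x = Rabs x.
Proof. unfold sb, sgn, Rabs. destruct (Rle_dec 0 x), (Rcase_abs x); lra. Qed.

Lemma odd1 : Z.Odd 1. Proof. exists 0%Z. reflexivity. Qed.

Lemma necessity {J} X (l : weight J) : 0 < lc l -> d_minimal X l -> minimality_cond X l.
Proof.
  intros Hc H. destruct X; simpl.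
  - intros j k. destruct (excluded_middle_informative (j = k)) as [->|jk]. lra.
    assert (Hr : is_root A1 (Pair j k true false) 1). { split; simpl; auto. congruence. }
    pose proof (dm_root _ _ _ H Hr) as h. unfold lam_coroot, lam_check, norm2, sgn in h; simpl in h. lra.
  - intros j k jk.
    assert (Hr : is_root B1 (Pair j k (sb (lt l j)) (sb (lt l k))) 1). { split; simpl; auto. }
    pose proof (dm_root _ _ _ H Hr) as h. unfold lam_coroot, lam_check, norm2 in h.
    rewrite !sgn_abs in h. simpl in h. lra.
  - intros j.
    assert (Hr : is_root C1 (Doub j (sb (lt l j))) 1). { split; simpl; auto. }
    pose proof (dm_root _ _ _ H Hr) as h. unfold lam_coroot, lam_check, norm2 in h.
    rewrite !sgn_abs in h. simpl in h. lra.
  - intros j k jk.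
    assert (Hr : is_root D1 (Pair j k (sb (lt l j)) (sb (lt l k))) 1). { split; simpl; auto. }
    pose proof (dm_root _ _ _ H Hr) as h. unfold lam_coroot, lam_check, norm2 in h.
    rewrite !sgn_abs in h. simpl in h. lra.
  - intros j.
    assert (Hr : is_root B2 (Sing j (sb (lt l j))) 1). { split; simpl; auto. right. split; auto. apply odd1. }
    pose proof (dm_root _ _ _ H Hr) as h. unfold lam_coroot, lam_check, norm2 in h.
    rewrite Rmult_assoc, !sgn_abs in h. simpl in h. lra.
  - intros j k jk.
    assert (Hr : is_root C2 (Pair j k (sb (lt l j)) (sb (lt l k))) 1). { split; simpl; auto. right. split; auto. apply odd1. }
    pose proof (dm_root _ _ _ H Hr) as h. unfold lam_coroot, lam_check, norm2 in h.
    rewrite !sgn_abs in h. simpl in h. lra.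
  - intros j.
    assert (Hr : is_root BC2 (Doub j (sb (lt l j))) 1). { split; simpl; auto. right. split; auto. apply odd1. exact I. }
    pose proof (dm_root _ _ _ H Hr) as h. unfold lam_coroot, lam_check, norm2 in h.
    rewrite !sgn_abs in h. simpl in h. lra.
Qed.

Theorem theorem4p4 (J : Type) (HJ : infinite_type J) (X : lsys) (l : weight J)
  (Hc : 0 < lc l) :
  d_minimal X l <-> minimality_cond X l.
Proof.
  split.
  - apply necessity; auto.
  - intros Hm mu Ho. destruct (orbit_inv X l mu Hc Hm Ho) as [_ [S [nu [w HI]]]].
    eapply final; eauto.
Qed.
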